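(* Consider the PSSG described in the context in the FULL-FULL scenario: $k_1\mu_1>2L\lambda$ and $k_2\mu_2>2L\lambda$. Define $$\theta^L_2=-\frac{k_q q_1(2L)+k_l(x_2-x_1)}{k_p d},\qquad \theta^R_2=\frac{k_q q_2(2L)+k_l(x_2-x_1)}{k_p d}.$$ If $p_1-p_2\in[\theta^R_2,\,p_{\max}-p_{\min}]$, then at the Nash equilibrium of the PSSG every PEV selects station 2. If $p_1-p_2\in[p_{\min}-p_{\max},\,\theta^L_2]$, then at the Nash equilibrium of the PSSG every PEV selects station 1.
   Context: The system is the segment $[-L,L]$ ($L>0$) with two charging stations located at $x_1<x_2$, $-L<x_1<x_2<L$. Station $i\in\{1,2\}$ has $k_i\ge 1$ (integer) identical charging ports, PEV service times with mean $1/\mu_i$ ($\mu_i>0$) and variance $\sigma_i^2$, and announces a price $p_i\in[p_{\min},p_{\max}]$. A continuum of PEVs is uniformly distributed on $[-L,L]$, generating charging requests at rate $\lambda>0$ per unit length. Each PEV at location $x$ selects station 1 or 2, possibly at random; a strategy profile is described by the probability $\omega(x)\in[0,1]$ that the PEV at $x$ selects station 1. Let $a_1=\int_{-L}^{L}\omega(x)\,dx$ and $a_2=2L-a_1$. For $0\le a<k_i\mu_i/\lambda$, $$q_i(a)=\frac{a\lambda\,(\sigma_i^2+\frac{1}{\mu_i^2})\,\rho^{k_i-1}}{2(k_i-1)!\,(k_i-\rho)^2\Big[\sum_{m=0}^{k_i-1}\frac{\rho^m}{m!}+\frac{\rho^{k_i}}{(k_i-1)!(k_i-\rho)}\Big]},\qquad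 \rho=\frac{a\lambda}{\mu_i},$$ is the mean waiting time at station $i$, and $q_i(a)=+\infty$ if $a\ge k_i\mu_i/\lambda$. Given $a_1,a_2$ (which a single PEV cannot change), a PEV at $x$ selecting station $i$ gets payoff $U(i;x)=-k_l|x-x_i|-k_q\,q_i(a_i)-k_p\,d\,p_i$, with constants $k_l,k_q,k_p,d>0$; a randomized choice yields the expected payoff. A Nash equilibrium of the PSSG is a profile in which every PEV's (possibly mixed) choice maximizes its expected payoff given $a_1,a_2$. *)

(* Defs.v *)
From HB Require Import structures.
From mathcomp Require Import all_boot all_order all_algebra.
From mathcomp Require Import all_classical all_reals all_analysis.
Set Implicit Arguments. Unset Strict Implicit. Unset Printing Implicit Defensive.
Import Order.TTheory GRing.Theory Num.Theory.
Local Open Scope classical_set_scope.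
Local Open Scope ring_scope.

Section PSSG.
Variable R : realType.

(* Finite branch of the mean waiting time q_i(a) (M/G/k approximation);
   k = number of ports, mu = service rate, s2 = variance sigma_i^2 of the
   service time, lam = request rate per unit length, a = attracted length. *)
Definition qform (k : nat) (mu s2 lam a : R) : R :=
  let rho := a * lam / mu in
  (a * lam * (s2 + 1 / mu ^+ 2) * rho ^+ k.-1) /
  (2 * (k.-1)`!%:R * (k%:R - rho) ^+ 2 *
     (\sum_(m < k) rho ^+ m / (m`!)%:R
      + rho ^+ k / ((k.-1)`!%:R * (k%:R - rho)))).

Definition qwait (k : nat) (mu s2 lam a : R) : \bar R :=
  if a < k%:R * mu / lam then (qform k mu s2 lam a)%:E else +oo%E.

Definition payoff (kl kq kp d xi pi : R) (q : \bar R) (x : R) : \bar R :=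
  ((- kl * `|x - xi| - kp * d * pi)%:E - (kq%:E * q))%E.

Definition a1_of (L : R) (omega : R -> R) : R :=
  fine (\int[@lebesgue_measure R]_(x in `[(- L)%R, L]%classic) (omega x)%:E)%E.

(* Nash equilibrium of the PSSG: omega is a (measurable) strategy profile
   with values in [0,1], and for every PEV x in [-L,L] the probability
   omega x maximizes its expected payoff, given a_1 and a_2 = 2L - a_1. *)
Definition is_NE (L lam : R) (k1 k2 : nat) (mu1 mu2 s21 s22 : R)
  (x1 x2 p1 p2 kl kq kp d : R) (omega : R -> R) : Prop :=
  measurable_fun `[- L, L] omega /\
  (forall x, x \in `[- L, L] -> 0 <= omega x <= 1) /\
  let a1 := a1_of L omega in
  let a2 := 2 * L - a1 in
  let U1 := payoff kl kq kp d x1 p1 (qwait k1 mu1 s21 lam a1) in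
  let U2 := payoff kl kq kp d x2 p2 (qwait k2 mu2 s22 lam a2) in
  let EU w x := ((w%:E * U1 x) + ((1 - w)%:E * U2 x))%E in
  forall x, x \in `[- L, L] ->
    forall w, 0 <= w <= 1 -> (EU w x <= EU (omega x) x)%E.

End PSSG.

(* Main.v *)
Require Import Defs.
From HB Require Import structures.
From mathcomp Require Import all_boot all_order all_algebra.
From mathcomp Require Import all_classical all_reals all_analysis.
From mathcomp Require Import ring lra measurable_realfun.
Import Order.TTheory GRing.Theory Num.Theory.
Local Open Scope classical_set_scope.
Local Open Scope ring_scope.
Section S. Variable R : realType.
Local Set Implicit Arguments. Local Unset Strict Implicit.
Definition Ssum (n : nat) (r : R) := \sum_(m < n.+1) r ^+ m / (m`!)%:R.
Lemma Ssum_ge1 n (r : R) : 0 <= r -> 1 <= Ssum n r.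
Proof.
move=> r0; rewrite /Ssum big_ord_recl /= expr0 fact0 divr1 lerDl.
apply: sumr_ge0 => i _; apply: divr_ge0; [exact: exprn_ge0 | exact: ler0n].
Qed.
Lemma term_le n j (r t : R) : 0 < r -> r <= t -> t ^+ n / t ^+ (n + j) <= r ^+ n / r ^+ (n + j).
Proof.
move=> r0 rt; have t0 : 0 < t by apply: lt_le_trans rt.
rewrite !exprD !invfM !mulrA !divff ?mul1r ?expf_neq0 ?gt_eqF //.
rewrite lef_pV2 ?posrE ?exprn_gt0 //; apply: lerXn2r => //; rewrite ?nnegrE ltW //.
Qed.
Lemma alg_id (r mu C P F K S : R) : 0 < r -> 0 < P -> 0 < F -> 0 < K -> mu != 0 -> 0 < S ->
  r * mu * C * P / (2 * F * K ^+ 2 * (S + r * P / (F * K))) =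
  mu * C / (2 * F * K ^+ 2 * (S / (r * P)) + 2 * K).
Proof.
move=> r0 P0 F0 K0 mu0 S0.
have E : 2 * F * K ^+ 2 * (S / (r * P)) + 2 * K = (2 * F * K ^+ 2 * (S + r * P / (F * K))) / (r * P).
  by field; rewrite ?gt_eqF.
rewrite E; field; rewrite ?gt_eqF //.
by apply: addr_gt0; rewrite !mulr_gt0.
Qed.
Lemma Tle n (r t : R) : 0 < r -> r <= t ->
  Ssum n t / t ^+ n.+1 <= Ssum n r / r ^+ n.+1.
Proof.
move=> r0 rt; rewrite /Ssum !mulr_suml; apply: ler_sum => i _.
rewrite (mulrAC (t ^+ i)) (mulrAC (r ^+ i)).
apply: ler_wpM2r; first by rewrite invr_ge0 ler0n.
have := @term_le i (n.+1 - i) r t r0 rt.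
by rewrite subnKC // ltnW.
Qed.

Definition gfun n (r : R) := 2 * (n`!)%:R * (n.+1%:R - r) ^+ 2 * (Ssum n r / r ^+ n.+1) + 2 * (n.+1%:R - r).

Lemma qform_eq n (mu s2 lam a : R) : 0 < mu -> 0 < lam -> 0 < a ->
  a < n.+1%:R * mu / lam ->
  qform n.+1 mu s2 lam a = mu * (s2 + 1 / mu ^+ 2) / gfun n (a * lam / mu).
Proof.
move=> mu0 lam0 a0 ak.
have r0 : 0 < a * lam / mu by rewrite divr_gt0 ?mulr_gt0.
have rk : a * lam / mu < n.+1%:R by rewrite ltr_pdivrMr // -ltr_pdivlMr.
rewrite /qform /gfun /= -/(Ssum n _).
set r := a * lam / mu.
have alr : a * lam = r * mu by rewrite /r mulrVK ?unitfE ?gt_eqF.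
have S1 := @Ssum_ge1 n _ (ltW r0).
rewrite alr [r ^+ n.+1]exprS [in RHS]exprS alg_id //.
all: first [ by rewrite exprn_gt0 | by rewrite ltr0n fact_gt0 | by rewrite subr_gt0
  | by rewrite gt_eqF | by apply: lt_le_trans S1 | match goal with |- ?g => idtac g end ].
Qed.

Lemma gfun_pos n (r : R) : 0 < r -> r < n.+1%:R -> 0 < gfun n r.
Proof.
move=> r0 rk; rewrite /gfun.
have S1 := @Ssum_ge1 n r (ltW r0).
have S0 : 0 <= Ssum n r / r ^+ n.+1.
  by apply: divr_ge0; [apply: le_trans S1 | exact: exprn_ge0 (ltW r0)].
have P : 0 <= 2 * (n`!)%:R * (n.+1%:R - r) ^+ 2 * (Ssum n r / r ^+ n.+1).
  by apply: mulr_ge0 => //; apply: mulr_ge0; [apply: mulr_ge0 => //; exact: ler0n | exact: sqr_ge0].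
have : 0 < 2 * (n.+1%:R - r) by rewrite mulr_gt0 // subr_gt0.
lra.
Qed.

Lemma gfun_lt n (r t : R) : 0 < r -> r < t -> t < n.+1%:R -> gfun n t < gfun n r.
Proof.
move=> r0 rt tk; have t0 : 0 < t by apply: lt_trans rt.
have T := @Tle n r t r0 (ltW rt).
have Tt : 0 <= Ssum n t / t ^+ n.+1.
  by apply: divr_ge0; [apply: le_trans (@Ssum_ge1 n t (ltW t0)) | exact: exprn_ge0 (ltW t0)].
have F : 0 < (n`!)%:R :> R by rewrite ltr0n fact_gt0.
rewrite /gfun.
set Tr := Ssum n r / _ in T *; set Tt' := Ssum n t / _ in T Tt *.
set f := (n`!)%:R in F *.
have h1 : (n.+1%:R - t) ^+ 2 * Tt' <= (n.+1%:R - r) ^+ 2 * Tr.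
  apply: ler_pM => //; first exact: sqr_ge0.
  rewrite ler_sqr ?nnegrE; lra.
have h2 : 2 * f * ((n.+1%:R - t) ^+ 2 * Tt') <= 2 * f * ((n.+1%:R - r) ^+ 2 * Tr).
  by apply: ler_wpM2l => //; rewrite mulr_ge0 ?ltW.
rewrite -!mulrA in h2 *; lra.
Qed.
Lemma qform0 k (mu s2 lam : R) : qform k mu s2 lam 0 = 0.
Proof. by rewrite /qform /= !mul0r. Qed.

Lemma qform_pos k (mu s2 lam a : R) : (1 <= k)%N -> 0 < mu -> 0 < lam -> 0 <= s2 -> 0 < a ->
  a < k%:R * mu / lam -> 0 < qform k mu s2 lam a.
Proof.
case: k => // n _ mu0 lam0 s0 a0 ak; rewrite qform_eq //.
have r0 : 0 < a * lam / mu by rewrite divr_gt0 ?mulr_gt0.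
have rk : a * lam / mu < n.+1%:R by rewrite ltr_pdivrMr // -ltr_pdivlMr.
apply: divr_gt0; last exact: gfun_pos.
by rewrite mulr_gt0 // ltr_wpDl // divr_gt0 // exprn_gt0.
Qed.

Lemma qform_ge0 k (mu s2 lam a : R) : (1 <= k)%N -> 0 < mu -> 0 < lam -> 0 <= s2 -> 0 <= a ->
  a < k%:R * mu / lam -> 0 <= qform k mu s2 lam a.
Proof.
move=> k1 mu0 lam0 s0; rewrite le_eqVlt => /orP[/eqP <- _|a0 ak]; first by rewrite qform0.
exact/ltW/qform_pos.
Qed.

Lemma qform_lt k (mu s2 lam a b : R) : (1 <= k)%N -> 0 < mu -> 0 < lam -> 0 <= s2 -> 0 <= a ->
  a < b -> b < k%:R * mu / lam -> qform k mu s2 lam a < qform k mu s2 lam b.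
Proof.
move=> k1 mu0 lam0 s0; rewrite le_eqVlt => /orP[/eqP <- b0 bk|a0 ab bk].
  by rewrite qform0 qform_pos.
move: k1 bk; case: k => // n _ bk.
have ak : a < n.+1%:R * mu / lam by apply: lt_trans bk.
rewrite !qform_eq //; last exact: lt_trans ab.
have r0 : 0 < a * lam / mu by rewrite divr_gt0 ?mulr_gt0.
have rt : a * lam / mu < b * lam / mu by rewrite ltr_pM2r ?invr_gt0 // ltr_pM2r.
have tk : b * lam / mu < n.+1%:R by rewrite ltr_pdivrMr // -ltr_pdivlMr.
rewrite ltr_pM2l; last by rewrite mulr_gt0 // ltr_wpDl // divr_gt0 // exprn_gt0.
rewrite ltf_pV2 ?posrE.
all: first [ exact: gfun_lt | exact: (@gfun_pos n _ (lt_trans r0 rt) tk)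
  | exact: (@gfun_pos n _ r0 (lt_trans rt tk)) | match goal with |- ?g => idtac g end ].
Qed.

Lemma qwait_fin k (mu s2 lam a : R) : a < k%:R * mu / lam ->
  qwait k mu s2 lam a = (qform k mu s2 lam a)%:E.
Proof. by move=> h; rewrite /qwait h. Qed.
Local Notation leb := (@lebesgue_measure R).

Lemma measD (L : R) : measurable ([set` `[- L, L]] : set R).
Proof. exact: measurable_itv. Qed.

Lemma lebD (L : R) : 0 < L -> leb [set` `[- L, L]] = (2 * L)%:E.
Proof.
move=> L0; rewrite lebesgue_measure_itv /= ifT; last by rewrite lte_fin; lra.
by rewrite -EFinB; congr (_%:E); lra.
Qed.

Lemma intcst (L : R) (c : \bar R) : 0 < L ->
  (\int[leb]_(x in [set` `[(- L)%R, L]]) (cst c) x = c * (2 * L)%:E)%E.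
Proof.
move=> L0; rewrite (@integral_cst _ _ _ leb _ (measD L)); congr (_ * _)%E; exact: lebD.
Qed.

Lemma a1_cst (L c : R) : 0 < L -> a1_of L (fun _ => c) = c * (2 * L).
Proof.
move=> L0; rewrite /a1_of.
have -> := @integral_cst _ _ _ leb _ (measD L) c%:E.
have E := lebD L0.
transitivity (fine (c%:E * (2 * L)%:E)%E); last by [].
by congr (fine (_ * _))%E; exact: E.
Qed.

Lemma a1_props (L : R) (omega : R -> R) : 0 < L ->
  measurable_fun [set` `[- L, L]] omega ->
  (forall x, x \in `[- L, L] -> 0 <= omega x <= 1) ->
  (\int[leb]_(x in [set` `[(- L)%R, L]]) (omega x)%:E = (a1_of L omega)%:E)%E /\
  0 <= a1_of L omega <= 2 * L.
Proof.
move=> L0 mo o01.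
have mE : measurable_fun [set` `[- L, L]] (EFin \o omega) by exact/measurable_EFinP.
have i0 : (0 <= \int[leb]_(x in [set` `[(- L)%R, L]]) (omega x)%:E)%E.
  by apply: integral_ge0 => x /= /o01 /andP[].
have i1 : (\int[leb]_(x in [set` `[(- L)%R, L]]) (omega x)%:E <= (2 * L)%:E)%E.
  rewrite -lebD // -[leb _]mul1e -(@integral_cst _ _ _ leb _ (measD L)).
  apply: (@ge0_le_integral _ _ _ leb _ (measD L)).
  - by move=> x /= /o01 /andP[]; rewrite lee_fin.
  - exact: mE.
  - exact: measurable_cst.
  - by move=> x /= /o01 /andP[]; rewrite lee_fin.
have fin : (\int[leb]_(x in [set` `[(- L)%R, L]]) (omega x)%:E)%E \is a fin_num.
  by rewrite ge0_fin_numE // (le_lt_trans i1) // ltry.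
split; first by rewrite /a1_of fineK.
rewrite /a1_of; apply/andP; split.
  by rewrite fine_ge0.
by rewrite -lee_fin fineK.
Qed.
Lemma ae0 (L : R) (f : R -> R) (P : R -> Prop) : 0 < L ->
  measurable_fun [set` `[- L, L]] f ->
  (forall x, x \in `[- L, L] -> 0 <= f x) ->
  (\int[leb]_(x in [set` `[(- L)%R, L]]) (f x)%:E = 0)%E ->
  (forall x, x \in `[- L, L] -> f x = 0 -> P x) ->
  {ae leb, forall x, x \in `[- L, L] -> P x}.
Proof.
move=> L0 mf f0 i0 HP.
have mE : measurable_fun [set` `[- L, L]] (EFin \o f) by exact/measurable_EFinP.
have h : (\int[leb]_(x in [set` `[(- L)%R, L]]) `|(EFin \o f) x| = 0)%E.
  rewrite -i0; apply: eq_integral => x; rewrite inE => /= xI.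
  by rewrite ger0_norm // f0.
have := (ae_eq_integral_abs leb (measD L) mE).1 h.
apply: filterS.
move=> x hx.
move=> xI.
apply: (HP x xI).
have := hx xI.
by move=> /= -[].
Qed.

Lemma int1 (L : R) : 0 < L -> leb.-integrable [set` `[- L, L]] (EFin \o cst (1:R)).
Proof.
move=> L0; apply/integrableP; split; first exact/measurable_EFinP/measurable_cst.
rewrite (eq_integral (cst 1%E)); last by move=> x _; rewrite /= normr1.
by rewrite intcst // mul1e ltry.
Qed.

Lemma int_omega (L : R) (omega : R -> R) : 0 < L ->
  measurable_fun [set` `[- L, L]] omega ->
  (forall x, x \in `[- L, L] -> 0 <= omega x <= 1) ->
  leb.-integrable [set` `[- L, L]] (EFin \o omega).
Proof.
move=> L0 mo o01; apply: (@le_integrable _ _ _ leb _ (measD L) _ (EFin \o cst 1)).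
- exact/measurable_EFinP.
- by move=> x /= /o01 /andP[a b]; rewrite normr1 /= lee_fin ger0_norm.
- exact: int1.
Qed.
Lemma ae1 (L : R) (omega : R -> R) : 0 < L ->
  measurable_fun [set` `[- L, L]] omega ->
  (forall x, x \in `[- L, L] -> 0 <= omega x <= 1) ->
  a1_of L omega = 2 * L ->
  {ae leb, forall x, x \in `[- L, L] -> omega x = 1}.
Proof.
move=> L0 mo o01 a2L.
have [iE _] := a1_props L0 mo o01.
apply: (@ae0 L (fun x => 1 - omega x)) => //.
- by apply: measurable_funB => //; exact: measurable_cst.
- by move=> x /o01 /andP[_ h]; rewrite subr_ge0.
- under eq_integral do rewrite EFinB.
  rewrite (@integralB_EFin _ _ _ leb _ (fun=> 1) omega (measD L) (int1 L0) (int_omega L0 mo o01)).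
  rewrite iE a2L intcst // mul1e.
  by rewrite -EFinB subrr.
- by move=> x _ /eqP; rewrite subr_eq0 => /eqP <-.
Qed.

Lemma payoff_fin (kl kq kp d xi pi q x : R) :
  payoff kl kq kp d xi pi q%:E x = (- kl * `|x - xi| - kp * d * pi - kq * q)%:E.
Proof. by rewrite /payoff -EFinM -EFinB. Qed.

Lemma EU_fin (w u1 u2 : R) :
  (w%:E * u1%:E + (1 - w)%:E * u2%:E)%E = (w * u1 + (1 - w) * u2)%:E.
Proof. by rewrite -!EFinM -EFinD. Qed.

Lemma absdiff (x a b : R) : a < b ->
  `|x - b| <= `|x - a| + (b - a) /\ `|x - a| <= `|x - b| + (b - a).
Proof.
move=> ab.
have [h|h] := lerP 0 (x - a); have [h'|h'] := lerP 0 (x - b);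
  rewrite ?(ger0_norm h) ?(ltr0_norm h) ?(ger0_norm h') ?(ltr0_norm h'); split; lra.
Qed.
Lemma mix_le (w u1 u2 : R) : 0 <= w -> u1 <= u2 -> w * u1 + (1 - w) * u2 <= 0 * u1 + (1 - 0) * u2.
Proof. move=> *; nra. Qed.
Lemma mix_le1 (w u1 u2 : R) : w <= 1 -> u2 <= u1 -> w * u1 + (1 - w) * u2 <= 1 * u1 + (1 - 1) * u2.
Proof. move=> *; nra. Qed.
Lemma mix_zero (o u1 u2 : R) : 0 <= o -> u1 < u2 -> 0 * u1 + (1 - 0) * u2 <= o * u1 + (1 - o) * u2 -> o = 0.
Proof. move=> *; apply/eqP; rewrite eq_le; apply/andP; split => //; nra. Qed.
Lemma mix_one (o u1 u2 : R) : o <= 1 -> u2 < u1 -> 1 * u1 + (1 - 1) * u2 <= o * u1 + (1 - o) * u2 -> o = 1.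
Proof. move=> *; apply/eqP; rewrite eq_le; apply/andP; split => //; nra. Qed.
End S.

Theorem theorem3 (R : realType) (L lam : R) (k1 k2 : nat)
  (mu1 mu2 s21 s22 x1 x2 pmin pmax p1 p2 kl kq kp d : R) :
  0 < L -> 0 < lam ->
  (1 <= k1)%N -> (1 <= k2)%N ->
  0 < mu1 -> 0 < mu2 -> 0 <= s21 -> 0 <= s22 ->
  - L < x1 -> x1 < x2 -> x2 < L ->
  pmin <= p1 <= pmax -> pmin <= p2 <= pmax ->
  0 < kl -> 0 < kq -> 0 < kp -> 0 < d ->
  (* FULL-FULL scenario *)
  2 * L * lam < k1%:R * mu1 -> 2 * L * lam < k2%:R * mu2 ->
  let thetaL := - (kq * qform k1 mu1 s21 lam (2 * L) + kl * (x2 - x1)) / (kp * d) in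
  let thetaR := (kq * qform k2 mu2 s22 lam (2 * L) + kl * (x2 - x1)) / (kp * d) in
  (thetaR <= p1 - p2 <= pmax - pmin ->
     is_NE L lam k1 k2 mu1 mu2 s21 s22 x1 x2 p1 p2 kl kq kp d (fun _ => 0) /\
     forall omega, is_NE L lam k1 k2 mu1 mu2 s21 s22 x1 x2 p1 p2 kl kq kp d omega ->
       {ae @lebesgue_measure R, forall x, x \in `[- L, L] -> omega x = 0}) /\
  (pmin - pmax <= p1 - p2 <= thetaL ->
     is_NE L lam k1 k2 mu1 mu2 s21 s22 x1 x2 p1 p2 kl kq kp d (fun _ => 1) /\
     forall omega, is_NE L lam k1 k2 mu1 mu2 s21 s22 x1 x2 p1 p2 kl kq kp d omega ->
       {ae @lebesgue_measure R, forall x, x \in `[- L, L] -> omega x = 1}).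
Proof.
move=> L0 lam0 k11 k21 mu10 mu20 s10 s20 xL1 x12 x2L hp1 hp2 kl0 kq0 kp0 d0 F1 F2 thetaL thetaR.
have B1 : 2 * L < k1%:R * mu1 / lam by rewrite ltr_pdivlMr.
have B2 : 2 * L < k2%:R * mu2 / lam by rewrite ltr_pdivlMr.
have kpd : 0 < kp * d by rewrite mulr_gt0.
have L2 : 0 < 2 * L by rewrite mulr_gt0.
have dx x := absdiff x x12.
split.
- move=> /andP[]; rewrite /thetaR ler_pdivrMr // => tR _.
  split.
  + split; first exact: measurable_cst.
    split; first by move=> *; rewrite lexx ler01.
    cbv zeta; rewrite a1_cst // mul0r subr0.
    rewrite [qwait _ _ _ _ 0]qwait_fin ?qform0; last exact: lt_trans B1.
    rewrite qwait_fin // => x xI w /andP[w0 w1].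
    rewrite !payoff_fin !EU_fin lee_fin; apply: mix_le => //.
    have [h1 _] := dx x.
    have : kl * `|x - x2| <= kl * (`|x - x1| + (x2 - x1)) by rewrite ler_pM2l.
    lra.
  + move=> omega [mo [hO H]].
    have [iE /andP[a0 a2]] := a1_props L0 mo hO.
    move: H; cbv zeta; set a := a1_of L omega in iE a0 a2 *.
    move: a0; rewrite le_eqVlt => /orP[/eqP a0|a0] H.
      apply: (@ae0 _ L omega) => //.
        by move=> x /hO /andP[].
      by rewrite iE -a0.
    apply: aeW => x xI.
    have := H x xI 0; rewrite lexx ler01 => /(_ isT).
    rewrite qwait_fin; last exact: le_lt_trans B1.
    rewrite qwait_fin; last by apply: le_lt_trans B2; lra.
    rewrite !payoff_fin !EU_fin lee_fin; apply: mix_zero; first by have /andP[] := hO x xI.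
    have q1 : 0 <= kq * qform k1 mu1 s21 lam a.
      apply: mulr_ge0 (ltW kq0) _; apply: qform_ge0 => //; by [apply: ltW | apply: le_lt_trans a2 B1].
    have q2 : kq * qform k2 mu2 s22 lam (2 * L - a) < kq * qform k2 mu2 s22 lam (2 * L).
      rewrite ltr_pM2l //; apply: qform_lt => //; lra.
    have [h1 _] := dx x.
    have : kl * `|x - x2| <= kl * (`|x - x1| + (x2 - x1)) by rewrite ler_pM2l.
    lra.
- move=> /andP[_]; rewrite /thetaL ler_pdivlMr // => tL.
  split.
  + split; first exact: measurable_cst.
    split; first by move=> *; rewrite lexx ler01.
    cbv zeta; rewrite a1_cst // mul1r subrr.
    rewrite [qwait _ _ _ _ 0]qwait_fin ?qform0; last exact: lt_trans B2.
    rewrite qwait_fin // => x xI w /andP[w0 w1].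
    rewrite !payoff_fin !EU_fin lee_fin; apply: mix_le1 => //.
    have [_ h2] := dx x.
    have : kl * `|x - x1| <= kl * (`|x - x2| + (x2 - x1)) by rewrite ler_pM2l.
    lra.
  + move=> omega [mo [hO H]].
    have [iE /andP[a0 a2]] := a1_props L0 mo hO.
    move: H; cbv zeta; set a := a1_of L omega in iE a0 a2 *.
    move: a2; rewrite le_eqVlt => /orP[/eqP a2|a2] H.
      exact: ae1.
    apply: aeW => x xI.
    have := H x xI 1; rewrite lexx ler01 => /(_ isT).
    rewrite qwait_fin; last by apply: lt_trans B1.
    rewrite qwait_fin; last by apply: le_lt_trans B2; lra.
    rewrite !payoff_fin !EU_fin lee_fin; apply: mix_one; first by have /andP[] := hO x xI.
    have q2 : 0 <= kq * qform k2 mu2 s22 lam (2 * L - a).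
      apply: mulr_ge0 (ltW kq0) _; apply: qform_ge0 => //; first lra.
      apply: le_lt_trans B2; lra.
    have q1 : kq * qform k1 mu1 s21 lam a < kq * qform k1 mu1 s21 lam (2 * L).
      by rewrite ltr_pM2l //; apply: qform_lt.
    have [_ h2] := dx x.
    have : kl * `|x - x1| <= kl * (`|x - x2| + (x2 - x1)) by rewrite ler_pM2l.
    lra.
Qed.
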